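(* Let $D$ be a locatable digraph of order $n$ with $\gamma_{OL}(D)=n$. If a vertex of $D$ is not domination-forced, then it is location-forced; and if a vertex of $D$ is not location-forced, then it is domination-forced.
   Context: Digraphs are finite and may contain loops; between two distinct vertices there may be arcs in one or both directions, no repeated arcs. $N^-(v)=\{u: uv\text{ is an arc}\}$ (contains $v$ iff $v$ has a loop). An OLD set of $D$ is a set $S\subseteq V(D)$ such that every vertex has an in-neighbour in $S$ and for every two distinct vertices $u,w$ some vertex of $S$ lies in exactly one of $N^-(u),N^-(w)$. $D$ is locatable if it has an OLD set, and then $\gamma_{OL}(D)$ is the minimum size of an OLD set. A vertex $v$ is domination-forced if some vertex $w$ has $N^-(w)=\{v\}$; it is location-forced if there are distinct vertices $x,y$ with $N^-(x)\ominus N^-(y)=\{v\}$ ($\ominus$ = symmetric difference). *)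

(* Defs.v *)
From mathcomp Require Import all_boot.
Set Implicit Arguments. Unset Strict Implicit. Unset Printing Implicit Defensive.

(* A digraph on a finite vertex type V is given by its arc relation
   arc : rel V, where arc u v means "uv is an arc" (loops allowed,
   at most one arc per ordered pair). *)

Definition in_nbhd (V : finType) (arc : rel V) (v : V) : {set V} :=
  [set u | arc u v].

Definition is_OLD (V : finType) (arc : rel V) (S : {set V}) : Prop :=
  (forall v : V, exists2 s, s \in S & s \in in_nbhd arc v) /\
  (forall u w : V, u != w ->
     exists2 s, s \in S &
       (s \in in_nbhd arc u) != (s \in in_nbhd arc w)).

Definition locatable (V : finType) (arc : rel V) : Prop :=
  exists S : {set V}, is_OLD arc S.

Definition gamma_OL_is (V : finType) (arc : rel V) (k : nat) : Prop :=
  (exists S : {set V}, is_OLD arc S /\ #|S| = k) /\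
  (forall S : {set V}, is_OLD arc S -> k <= #|S|).

Definition domination_forced (V : finType) (arc : rel V) (v : V) : Prop :=
  exists w : V, in_nbhd arc w = [set v].

Definition location_forced (V : finType) (arc : rel V) (v : V) : Prop :=
  exists x y : V, x != y /\
    (in_nbhd arc x :\: in_nbhd arc y) :|: (in_nbhd arc y :\: in_nbhd arc x)
      = [set v].

(* Main.v *)
Require Import Defs.
From mathcomp Require Import all_boot.
From Stdlib Require Import Classical.

Lemma key (V : finType) (arc : rel V) (v : V) :
  locatable arc -> gamma_OL_is arc #|V| ->
  ~ domination_forced arc v -> ~ location_forced arc v -> False.
Proof.
move=> [S0 [H0d H0s]] [_ Hmin] Hnd Hnl.
suff HO : is_OLD arc (setT :\ v).
  have := Hmin _ HO.
  by rewrite -cardsT (cardsD1 v [set: V]) in_setT /= add1n ltnn.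
split.
- move=> w.
  case: (boolP [exists s, (s != v) && arc s w]).
    move=> /existsP [s /andP [sv asw]].
    by exists s; rewrite ?in_setD1 ?sv ?in_setT // inE.
  move=> /existsPn Hn; exfalso; apply: Hnd; exists w.
  have [s0 _] := H0d w; rewrite inE => as0.
  have Hs : forall s, arc s w -> s = v.
    by move=> s asw; move: (Hn s); rewrite asw andbT negbK => /eqP.
  apply/setP => x; rewrite !inE.
  apply/idP/eqP; first by move/Hs.
  by move=> ->; rewrite -(Hs _ as0).
- move=> u w uw.
  case: (boolP [exists s, (s != v) && ((s \in in_nbhd arc u) != (s \in in_nbhd arc w))]).
    move=> /existsP [s /andP [sv sd]].
    by exists s; rewrite ?in_setD1 ?sv ?in_setT.
  move=> /existsPn Hn; exfalso; apply: Hnl; exists u, w; split => //.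
  have [s0 _ sd0] := H0s u w uw.
  have Hs : forall s, (s \in in_nbhd arc u) != (s \in in_nbhd arc w) -> s = v.
    by move=> s sd; move: (Hn s); rewrite sd andbT negbK => /eqP.
  apply/setP => x; rewrite !inE.
  have E : ((x \in in_nbhd arc u) != (x \in in_nbhd arc w)) =
    (~~ arc x w && arc x u || ~~ arc x u && arc x w).
    by rewrite !inE; case: (arc x u); case: (arc x w).
  rewrite -E; apply/idP/eqP; first by move/Hs.
  by move=> ->; rewrite -(Hs _ sd0).
Qed.

Theorem corollary6 (V : finType) (arc : rel V) :
  locatable arc -> gamma_OL_is arc #|V| ->
  (forall v : V, ~ domination_forced arc v -> location_forced arc v) /\
  (forall v : V, ~ location_forced arc v -> domination_forced arc v).
Proof.
move=> HL HG; split=> v H; apply: NNPP => H'.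
- exact: (@key V arc v HL HG H H').
- exact: (@key V arc v HL HG H' H).
Qed.
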